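(* Let $r,s\ge 1$ and let $A_1,\dots,A_r$ be real $s\times s$ matrices with non-negative entries. Let $A$ be the $rs\times rs$ block circulant matrix \[ A = \begin{pmatrix} A_1 & A_2 & A_3 & \dots & A_r\\ A_r & A_1 & A_2 & \dots & A_{r-1}\\ A_{r-1} & A_r & A_1 & \dots & A_{r-2}\\ \vdots & & & & \vdots\\ A_2 & A_3 & A_4 & \dots & A_1 \end{pmatrix}. \] Then $\rho(A) = \rho\left(\sum_{i=1}^r A_i \right)$.
   Context: For a square matrix $M$, $\rho(M)$ denotes its spectral radius. *)

(* Defs.v *)
From HB Require Import structures.
From mathcomp Require Import all_boot all_order all_algebra.
From mathcomp Require Import reals.
From mathcomp.real_closed Require Import complex.
Set Implicit Arguments. Unset Strict Implicit. Unset Printing Implicit Defensive.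
Import Order.TTheory GRing.Theory Num.Theory.
Local Open Scope ring_scope.
Local Open Scope complex_scope.

(* Eigenvalues (with multiplicity) of a complex square matrix: the roots of
   its characteristic polynomial, obtained from its factorisation into
   linear factors over the algebraically closed field R[i]. *)
Definition mx_eigenvalues (R : rcfType) (n : nat) (M : 'M[R[i]]_n) : seq R[i] :=
  sval (closed_field_poly_normal (char_poly M)).

(* Spectral radius of a real square matrix:
   rho(M) = max { |lambda| : lambda complex eigenvalue of M } (0 if n = 0). *)
Definition spectral_radius (R : rcfType) (n : nat) (M : 'M[R]_n) : R[i] :=
  \big[Num.max/0]_(z <- mx_eigenvalues (map_mx (fun x : R => x%:C) M)) `|z|.

(* Block circulant matrix with first block row A_0, A_1, ..., A_r
   (blocks indexed 0..r, each of size s.+1); block (p, q) is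
   A_((q - p) mod (r+1)). *)
Definition block_circulant (R : Type) (r s : nat) (A : 'I_r.+1 -> 'M[R]_s.+1)
  : 'M[R]_(r.+1 * s.+1) :=
  \matrix_(i, j) A (inord (((j %/ s.+1) + r.+1 - (i %/ s.+1)) %% r.+1))
                   (inord (i %% s.+1)) (inord (j %% s.+1)).

(* Main.v *)
Require Import Defs.
From HB Require Import structures.
From mathcomp Require Import all_boot all_order all_algebra.
From mathcomp Require Import reals.
From mathcomp.real_closed Require Import complex polyrcf.
From mathcomp Require Import ring zify.
Set Implicit Arguments. Unset Strict Implicit. Unset Printing Implicit Defensive.
Import Order.TTheory GRing.Theory Num.Theory.
Local Open Scope ring_scope.

Section Real.
Variable R : rcfType.

Lemma hchar n (S : 'M[R]_n) t : (char_poly S).[t] = \det (t%:M - S).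
Proof.
rewrite horner_sum; apply: eq_bigr => s _.
rewrite hornerM horner_exp !hornerE; congr (_ * _).
rewrite (big_morph _ (fun p q => hornerM p q t) (hornerC 1 t)).
by apply: eq_bigr => i _; rewrite !mxE !(hornerE, hornerMn).
Qed.

Lemma pos_noroot n (S : 'M[R]_n) mu :
  (forall t, mu <= t -> ~~ root (char_poly S) t) ->
  forall t, mu <= t -> 0 < (char_poly S).[t].
Proof.
move=> H t ht.
have H1 : {in `[mu, +oo[, forall x, ~~ root (char_poly S) x}.
  by move=> z; rewrite in_itv /= andbT; apply: H.
have := sgp_pinftyP H1 (_ : t \in `[mu, +oo[).
rewrite /sgp_pinfty (monicP (char_poly_monic S)) sgr1.
by rewrite in_itv /= ht => /(_ isT) /eqP; rewrite sgr_cp0.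
Qed.

Lemma schur n (al : 'M[R]_1) (be : 'M_(1,n)) (ga : 'M_(n,1)) (D : 'M_n) :
  D \in unitmx ->
  \det (block_mx al be ga D : 'M_(1 + n)) =
  \det D * (al - be *m invmx D *m ga) 0 0.
Proof.
move=> uD.
have -> : block_mx al be ga D = block_mx 1%:M be 0 D *m
          block_mx (al - be *m invmx D *m ga) 0 (invmx D *m ga) 1%:M.
  rewrite mulmx_block !mul1mx !mul0mx ?mulmx0 !mulmx1 ?addr0 ?add0r.
  by rewrite !mulmxA (mulmxV uD) mul1mx subrK.
rewrite det_mulmx det_ublock det_lblock det1 det_mx11 mul1r.
by rewrite [\det 1%:M]det1 mulr1.
Qed.

Lemma nneg_mul n (u : 'M[R]_(1,n)) (c : 'M_(n,1)) :
  (forall j, 0 <= u 0 j) -> (forall j, 0 <= c j 0) -> 0 <= (u *m c) 0 0.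
Proof. by move=> hu hc; rewrite mxE sumr_ge0 // => j _; rewrite mulr_ge0. Qed.


Lemma key n : forall (S : 'M[R]_n) (mu : R), (forall i j, 0 <= S i j) ->
  (forall t, mu <= t -> ~~ root (char_poly S) t) ->
  forall x : 'rV[R]_n, (forall j, 0 <= (x *m (mu%:M - S)) 0 j) ->
  forall j, 0 <= x 0 j.
Proof.
elim: n => [|n IH]; first by move=> S mu _ _ x _ [] [].

change (forall (S : 'M[R]_(1 + n)) (mu : R), (forall i j, 0 <= S i j) ->
  (forall t, mu <= t -> ~~ root (char_poly S) t) ->
  forall x : 'rV[R]_(1 + n), (forall j, 0 <= (x *m (mu%:M - S)) 0 j) ->
  forall j, 0 <= x 0 j).
move=> S mu S0 Hroot.
set a := ulsubmx S; set b := ursubmx S; set c := dlsubmx S; set D := drsubmx S.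
have a0 : 0 <= a 0 0 by rewrite !mxE; apply: S0.
have b0 j : 0 <= b 0 j by rewrite !mxE; apply: S0.
have c0 j : 0 <= c j 0 by rewrite !mxE; apply: S0.
have D0 i j : 0 <= D i j by rewrite !mxE; apply: S0.
have blk t : t%:M - S = block_mx (t%:M - a) (- b) (- c) (t%:M - D).
  by rewrite -{1}(submxK S) (scalar_mx_block 1 n) opp_block_mx add_block_mx ?oppr0 ?add0r ?sub0r.
have detS t : (t%:M - D) \in unitmx -> \det (t%:M - S) =
   \det (t%:M - D) * (t - a 0 0 - (b *m invmx (t%:M - D) *m c) 0 0).
  move=> uD; rewrite blk schur // mulNmx; congr (_ * _).
  by rewrite mxE [(_ - a) 0 0]mxE mulNmx mulmxN opprK !mxE eqxx mulr1n.
have ClaimA : forall t, mu <= t -> ~~ root (char_poly D) t.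
  move=> t1 ht1; apply/negP => rt1.
  set h := char_poly D in rt1 *.
  have hn0 : h != 0 by rewrite monic_neq0 // char_poly_monic.
  have t1cb : t1 < cauchy_bound h.
    by have := root_in_cauchy_bound hn0 rt1; rewrite in_itv /= => /andP[].
  have nbig z : cauchy_bound h <= z -> ~~ root h z.
    by move=> hz; apply: (ge_cauchy_bound hn0); rewrite in_itv /= hz.
  case: (prev_rootP h (t1 - 1) (cauchy_bound h)) => [h0|y _ hy0 yin ynr|cc _ _ cnr].
  - by rewrite h0 eqxx in hn0.
  - have after z : y < z -> ~~ root h z.
      move=> yz; case: (ltrP z (cauchy_bound h)) => zc; last exact: nbig.
      by apply: ynr; rewrite in_itv /= yz zc.
    have t1y : t1 <= y.
      by rewrite leNgt; apply/negP => yt1; move: (after _ yt1); rewrite rt1.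
    have muy : mu <= y := le_trans ht1 t1y.
    pose q := ('X - (a 0 0)%:P) * h - char_poly S.
    have qpos z : y < z -> 0 <= q.[z].
      move=> yz.
      have aft : forall t', z <= t' -> ~~ root (char_poly D) t'.
        by move=> t' ht'; apply: after; apply: lt_le_trans ht'.
      have hz : 0 < h.[z] := pos_noroot aft (lexx z).
      have uD : (z%:M - D) \in unitmx by rewrite unitmxE unitfE -hchar gt_eqF.
      set u := b *m invmx (z%:M - D).
      have u0 : forall j, 0 <= u 0 j.
        apply: (IH D z D0 aft u) => j.
        by rewrite /u mulmxKV.
      rewrite /q hornerD hornerN hornerM hornerXsubC (hchar S) detS // -(hchar D) -/h.
      have -> : (z - a 0 0) * h.[z] - h.[z] * (z - a 0 0 - (u *m c) 0 0) =
                h.[z] * (u *m c) 0 0 by ring.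
      by apply: mulr_ge0; [exact: ltW | exact: nneg_mul].
    have qy : 0 <= q.[y].
      rewrite leNgt; apply/negP => qneg.
      have qn : 0 < - q.[y] by rewrite oppr_gt0.
      have [d d0 Hd] := poly_cont y q qn.
      have d2 : 0 < d / 2 by rewrite divr_gt0.
      have yz : y < y + d / 2 by rewrite ltrDl.
      have hlt : `|(y + d / 2) - y| < d.
        by rewrite addrAC subrr add0r gtr0_norm // ltr_pdivrMr // ltr_pMr // ltr1n.
      have := le_lt_trans (ler_norm _) (Hd _ hlt).
      rewrite ltrBlDr addNr => qlt.
      by move: (le_lt_trans (qpos _ yz) qlt); rewrite ltxx.
    have fneg : (char_poly S).[y] <= 0.
      by move: qy; rewrite /q hornerD hornerN hornerM hy0 mulr0 add0r oppr_ge0.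
    have fpos := pos_noroot (fun t ht => Hroot t (le_trans muy ht)) (lexx y).
    by move: (lt_le_trans fpos fneg); rewrite ltxx.
  - have : t1 \in `](t1 - 1), (cauchy_bound h)[.
      by rewrite in_itv /= t1cb ltrBlDr ltrDl ltr01.
    by move=> /cnr; rewrite rt1.
move=> x Hx.
have IHmu := IH D mu D0 ClaimA.
have hD := pos_noroot ClaimA (lexx mu).
have hS := pos_noroot Hroot (lexx mu).
rewrite hchar in hD.
have uD : (mu%:M - D) \in unitmx by rewrite unitmxE unitfE gt_eqF.
set M' := mu%:M - D in uD hD IHmu.
set u := b *m invmx M'.
have u0 : forall j, 0 <= u 0 j by apply: IHmu => j; rewrite /u mulmxKV.
set s := mu - a 0 0 - (u *m c) 0 0.
have s0 : 0 < s by move: hS; rewrite hchar detS // -/M' -/u -/s (pmulr_rgt0 _ hD).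
set x0 := lsubmx x; set x' := rsubmx x.
have Ex : x *m (mu%:M - S) =
   row_mx (x0 *m (mu%:M - a) + x' *m (- c)) (x0 *m (- b) + x' *m M').
  by rewrite -{1}(hsubmxK x) blk mul_row_block.
set Y0 := x0 *m (mu%:M - a) + x' *m (- c) in Ex.
set Y' := x0 *m (- b) + x' *m M' in Ex.
have Y0p : 0 <= Y0 0 0 by have := Hx (lshift n 0); rewrite Ex row_mxEl.
have Y'p j : 0 <= Y' 0 j by have := Hx (rshift 1 j); rewrite Ex row_mxEr.
have v0 : forall j, 0 <= (Y' *m invmx M') 0 j.
  by apply: IHmu => j; rewrite mulmxKV.
have EM : x' *m M' = Y' + x0 *m b by rewrite /Y' mulmxN addrAC addNr add0r.
have Ex' : x' = Y' *m invmx M' + x0 *m u.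
  by move: (congr1 (mulmx^~ (invmx M')) EM); rewrite /= mulmxK // mulmxDl /u mulmxA.
have E1 : Y0 + (Y' *m invmx M') *m c = x0 *m (mu%:M - a - u *m c).
  rewrite /Y0 {1}Ex' mulmxN mulmxDl opprD addrA addrAC subrK.
  by rewrite !mulmxBr !mulmxA.
have mx11E (K : 'M[R]_1) : (x0 *m K) 0 0 = x0 0 0 * K 0 0.
  by rewrite mxE big_ord1.
have E2 : (mu%:M - a - u *m c) 0 0 = s by rewrite /s !mxE eqxx mulr1n.
have key0 : 0 <= x0 0 0 * s.
  rewrite -E2 -mx11E -E1 mxE addr_ge0 //.
  exact: nneg_mul.
have x00 : 0 <= x0 0 0 by move: key0; rewrite pmulr_lge0.
have x'0 : forall j, 0 <= x' 0 j.
  apply: IHmu => j; rewrite EM mxE addr_ge0 // mxE big_ord1.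
  by rewrite mulr_ge0.
move=> j; rewrite -[x](hsubmxK x) mxE; case: (split j) => k.
  by rewrite ord1.
exact: x'0.
Qed.

Lemma CW n (S : 'M[R]_n) (z : 'rV[R]_n) mu :
  (forall i j, 0 <= S i j) -> (exists j, 0 < z 0 j) ->
  (forall j, mu * z 0 j <= (z *m S) 0 j) ->
  ~ (forall t, mu <= t -> ~~ root (char_poly S) t).
Proof.
move=> S0 [j zj] Hz Hr.
have H1 : forall k, 0 <= (- z *m (mu%:M - S)) 0 k.
  move=> k; rewrite mulNmx mulmxBr opprB mul_mx_scalar mxE [X in _ + X]mxE [X in _ - X]mxE subr_ge0; exact: Hz.
have := @key n S mu S0 Hr (- z) H1 j.
rewrite mxE oppr_ge0 => h; move: (lt_le_trans zj h); by rewrite ltxx.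
Qed.

End Real.

Section Cx.
Variable R : rcfType.
Local Notation C := R[i].

Lemma bigmax_seq (s : seq C) :
  [/\ 0 <= \big[Num.max/0]_(z <- s) `|z|,
      (forall z, z \in s -> `|z| <= \big[Num.max/0]_(z <- s) `|z|) &
      (forall c, 0 <= c -> (forall z, z \in s -> `|z| <= c) ->
         \big[Num.max/0]_(z <- s) `|z| <= c)].
Proof.
elim: s => [|a s [IH1 IH2 IH3]]; first by rewrite big_nil; split.
rewrite big_cons.
have cmp : `|a| >=< \big[Num.max/0]_(z <- s) `|z|.
  by apply: real_comparable; apply: ger0_real.
split.
- by rewrite comparable_le_max // IH1 orbT.
- move=> z; rewrite inE => /orP[/eqP ->|zs].
    by rewrite comparable_le_max // lexx.
  by rewrite comparable_le_max // IH2 ?orbT.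
- move=> c c0 H; rewrite comparable_ge_max // H ?inE ?eqxx //=.
  by apply: IH3 => // z zs; apply: H; rewrite inE zs orbT.
Qed.

End Cx.

Section Idx.
Variables r s : nat.

Lemma idx_proof (p : 'I_r.+1) (j : 'I_s.+1) : (p * s.+1 + j < r.+1 * s.+1)%N.
Proof. have := ltn_ord p; have := ltn_ord j; nia. Qed.

Definition idx p j : 'I_(r.+1 * s.+1) := Ordinal (idx_proof p j).

Lemma idx_div p j : (idx p j %/ s.+1)%N = p.
Proof. by rewrite /= divnMDl // divn_small ?addn0. Qed.

Lemma idx_mod p j : (idx p j %% s.+1)%N = j.
Proof. by rewrite /= modnMDl modn_small. Qed.

Lemma idxP (k : 'I_(r.+1 * s.+1)) :
  k = idx (inord (k %/ s.+1)) (inord (k %% s.+1)).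
Proof.
apply: val_inj => /=; rewrite !inordK ?ltn_pmod // -?divn_eq //.
by rewrite ltn_divLR // ltn_ord.
Qed.

Lemma sum_idx (V : nmodType) (F : 'I_(r.+1 * s.+1) -> V) :
  \sum_k F k = \sum_p \sum_j F (idx p j).
Proof.
rewrite pair_big /=.
rewrite (reindex (fun pj : 'I_r.+1 * 'I_s.+1 => idx pj.1 pj.2)) //.
exists (fun k : 'I_(r.+1 * s.+1) => (inord (k %/ s.+1) : 'I_r.+1, inord (k %% s.+1) : 'I_s.+1)) => [[p j] _|k _] /=.
  by rewrite idx_div idx_mod !inord_val.
by rewrite -idxP.
Qed.

Definition cyc (p q : 'I_r.+1) : 'I_r.+1 := inord ((q + r.+1 - p) %% r.+1).

Lemma cyc_injp q : injective (cyc^~ q).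
Proof.
move=> p p' /(congr1 val) /=; rewrite !inordK ?ltn_pmod // => E.
apply: val_inj => /=.
have Hp : (q + r.+1 - p + p = q + r.+1)%N.
  by rewrite subnK // (leq_trans (ltnW (ltn_ord p))) // leq_addl.
have Hp' : (q + r.+1 - p' + p' = q + r.+1)%N.
  by rewrite subnK // (leq_trans (ltnW (ltn_ord p'))) // leq_addl.
have : (q + r.+1 - p' + p = q + r.+1 - p' + p' %[mod r.+1])%N.
  by rewrite -modnDml -E modnDml Hp Hp'.
by move/eqP; rewrite eqn_modDl (modn_small (ltn_ord p)) (modn_small (ltn_ord p')) => /eqP.
Qed.

Lemma cyc_injq p : injective (cyc p).
Proof.
move=> q q' /(congr1 val) /=; rewrite !inordK ?ltn_pmod // => E.
apply: val_inj => /=.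
have Hq (x : 'I_r.+1) : (x + r.+1 - p + p = r.+1 + x)%N.
  rewrite subnK; first exact: addnC.
  by rewrite (leq_trans (ltnW (ltn_ord p))) // leq_addl.
have : (r.+1 + q = r.+1 + q' %[mod r.+1])%N.
  by rewrite -(Hq q) -(Hq q') -modnDml E modnDml.
by move/eqP; rewrite eqn_modDl (modn_small (ltn_ord q)) (modn_small (ltn_ord q')) => /eqP.
Qed.

End Idx.

Section Main.
Variable R : rcfType.
Local Open Scope complex_scope.

Lemma mem_eigs n (M : 'M[R[i]]_n) z :
  (z \in mx_eigenvalues M) = root (char_poly M) z.
Proof.
rewrite /mx_eigenvalues; case: closed_field_poly_normal => rs /= Hr.
by rewrite Hr (monicP (char_poly_monic M)) scale1r root_prod_XsubC.
Qed.

Definition normc (c : R[i]) : R := complex.Re `|c|.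

Lemma normCE (c : R[i]) : `|c| = (normc c)%:C.
Proof. by rewrite /normc RRe_real // normr_real. Qed.

Lemma normc_ge0 (c : R[i]) : 0 <= normc c.
Proof. by rewrite -lecR -normCE normr_ge0. Qed.

Lemma normc_gt0 (c : R[i]) : c != 0 -> 0 < normc c.
Proof. by move=> cn0; rewrite -ltcR -normCE normr_gt0. Qed.

End Main.

Lemma map_bc (T T' : Type) (f : T -> T') r s (A : 'I_r.+1 -> 'M[T]_s.+1) :
  map_mx f (block_circulant A) = block_circulant (fun k => map_mx f (A k)).
Proof. by apply/matrixP => i j; rewrite !mxE. Qed.

Lemma bc_idx (T : Type) r s (A : 'I_r.+1 -> 'M[T]_s.+1) p j q l :
  block_circulant A (idx p j) (idx q l) = A (cyc p q) j l.
Proof. by rewrite /block_circulant mxE !idx_div !idx_mod !inord_val. Qed.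

Lemma sum_cycp (V : nmodType) r (q : 'I_r.+1) (F : 'I_r.+1 -> V) :
  \sum_p F (cyc p q) = \sum_k F k.
Proof. by symmetry; apply: (reindex_inj (@cyc_injp r q)). Qed.

Lemma sum_cycq (V : nmodType) r (p : 'I_r.+1) (F : 'I_r.+1 -> V) :
  \sum_q F (cyc p q) = \sum_k F k.
Proof. by symmetry; apply: (reindex_inj (@cyc_injq r p)). Qed.

Lemma eig_up (F : fieldType) r s (B : 'I_r.+1 -> 'M[F]_s.+1) (lam : F) :
  eigenvalue (\sum_k B k) lam -> eigenvalue (block_circulant B) lam.
Proof.
case/eigenvalueP => v Hv vn0; apply/eigenvalueP.
exists (\row_i v 0 (inord (i %% s.+1))); last first.
  apply: contra vn0 => /eqP w0; apply/eqP/rowP => j.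
  have := congr1 (fun M : 'rV[F]_(r.+1 * s.+1) => M 0 (idx (ord0 : 'I_r.+1) j)) w0.
  by rewrite !mxE idx_mod inord_val.
apply/rowP => k; rewrite (idxP k).
move: (inord (k %/ s.+1)) (inord (k %% s.+1)) => q l.
rewrite !mxE idx_mod inord_val sum_idx.
transitivity ((v *m \sum_k B k) 0 l); last by rewrite Hv mxE.
under eq_bigr => p _ do under eq_bigr => j _ do
  rewrite mxE idx_mod inord_val bc_idx.
rewrite exchange_big mxE; apply: eq_bigr => j _.
by rewrite -mulr_sumr summxE (sum_cycp q (fun k => B k j l)).
Qed.

Section EigDown.
Local Open Scope complex_scope.

Lemma eig_down (R : rcfType) r s (A : 'I_r.+1 -> 'M[R]_s.+1)
  (hA : forall k i j, 0 <= A k i j) (lam : R[i]) :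
  eigenvalue (block_circulant (fun k => map_mx (fun x : R => x%:C) (A k))) lam ->
  `|lam| <= spectral_radius (\sum_(k < r.+1) A k).
Proof.
move=> /eigenvalueP [x Hx xn0].
set S := \sum_(k < r.+1) A k.
have S0 i j : 0 <= S i j by rewrite summxE sumr_ge0.
pose nx p j := normc (x 0 (idx p j)).
pose z : 'rV[R]_s.+1 := \row_l \sum_p nx p l.
have Hql q l : normc lam * nx q l <= \sum_p \sum_j nx p j * A (cyc p q) j l.
  have E := congr1 (fun M : 'rV[R[i]]_(r.+1 * s.+1) => M 0 (idx q l)) Hx.
  move: E; rewrite /= mxE [X in _ = X]mxE sum_idx.
  rewrite (eq_bigr (fun p => \sum_j x 0 (idx p j) * (A (cyc p q) j l)%:C)); last first.
    by move=> p _; apply: eq_bigr => j _; rewrite bc_idx mxE.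
  move=> E.
  rewrite -lecR rmorphM /= /nx -!normCE -normrM -E.
  rewrite rmorph_sum; apply: le_trans (ler_norm_sum _ _ _) _; apply: ler_sum => p _.
  rewrite rmorph_sum; apply: le_trans (ler_norm_sum _ _ _) _; apply: ler_sum => j _.
  by rewrite rmorphM /= -normCE normrM [`|_%:C|]ger0_norm ?ler0c.
have Hz l : normc lam * z 0 l <= (z *m S) 0 l.
  have -> : (z *m S) 0 l = \sum_q \sum_p \sum_j nx p j * A (cyc p q) j l.
    rewrite mxE.
    rewrite (eq_bigr (fun j => \sum_p \sum_q nx p j * A (cyc p q) j l)); last first.
      move=> j _; rewrite mxE mulr_suml; apply: eq_bigr => p _.
      by rewrite summxE -(sum_cycq p) mulr_sumr.
    rewrite exchange_big /=.
    rewrite (eq_bigr (fun p => \sum_q \sum_j nx p j * A (cyc p q) j l)); last first.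
      by move=> p _; rewrite exchange_big.
    by rewrite exchange_big.
  rewrite mxE mulr_sumr; apply: ler_sum => q _; exact: Hql.
have zpos : exists l, 0 < z 0 l.
  have : [exists k, x 0 k != 0].
    rewrite -negb_forall; apply: contra xn0 => /forallP H.
    by apply/eqP/rowP => k; rewrite mxE; apply/eqP; exact: H.
  case/existsP => k; rewrite (idxP k); move: (inord _) (inord _) => l p xk.
  exists l; rewrite mxE (bigD1 p) //=; apply: (lt_le_trans (normc_gt0 xk)).
  by rewrite lerDl sumr_ge0 // => i _; apply: normc_ge0.
apply: contraT => H.
exfalso; apply: (CW S0 zpos Hz) => t ht; apply/negP => rt; apply: (negP H).
have : (t%:C \in mx_eigenvalues (map_mx (fun x : R => x%:C) S)).
  by rewrite mem_eigs -(map_char_poly (real_complex R)) rmorph_root.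
have [_ ub _] := bigmax_seq (mx_eigenvalues (map_mx (fun x : R => x%:C) S)).
have t0 : 0 <= t := le_trans (normc_ge0 lam) ht.
move=> /ub; rewrite ger0_norm ?ler0c // => tle.
rewrite /spectral_radius; apply: le_trans tle; by rewrite normCE lecR.
Qed.

End EigDown.

Theorem lemma3p4 (R : realType) (r s : nat) (A : 'I_r.+1 -> 'M[R]_s.+1)
  (hA : forall (k : 'I_r.+1) (i j : 'I_s.+1), 0 <= A k i j) :
  spectral_radius (block_circulant A) = spectral_radius (\sum_(k < r.+1) A k).
Proof.
have rho0 n (M : 'M[R]_n) : 0 <= spectral_radius M.
  by rewrite /spectral_radius; case: (bigmax_seq (mx_eigenvalues (map_mx (fun x : R => (x%:C)%C) M))).
apply/le_anti/andP; split.
- rewrite {1}/spectral_radius map_bc.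
  have [_ _ le] := bigmax_seq
    (mx_eigenvalues (block_circulant (fun k => map_mx (fun x : R => (x%:C)%C) (A k)))).
  apply: le => // z; rewrite mem_eigs -eigenvalue_root_char => ez.
  have := @eig_down R r s A hA z ez; exact: id.
- rewrite {1}/spectral_radius.
  have [_ _ le] := bigmax_seq
    (mx_eigenvalues (map_mx (fun x : R => (x%:C)%C) (\sum_(k < r.+1) A k))).
  apply: le => // z; rewrite mem_eigs -eigenvalue_root_char => ez.
  have : z \in mx_eigenvalues (map_mx (fun x : R => (x%:C)%C) (block_circulant A)).
    rewrite map_bc mem_eigs -eigenvalue_root_char; apply: eig_up.
    suff -> : \sum_k map_mx (fun x : R => (x%:C)%C) (A k) =
              map_mx (fun x : R => (x%:C)%C) (\sum_(k < r.+1) A k) by [].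
    apply/matrixP => i j; rewrite [LHS]summxE [RHS]mxE summxE rmorph_sum.
    by apply: eq_bigr => k _; rewrite mxE.
  by case: (bigmax_seq (mx_eigenvalues (map_mx (fun x : R => (x%:C)%C) (block_circulant A)))) => _ ub _ /ub.
Qed.
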